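(* Let $\rho$ be a finite intensity on $\Omega=B^d_+\times B^d_+$ with total mass $\Lambda>0$ such that $\mu=\rho/\Lambda$ is absolutely continuous with respect to Lebesgue measure on $\mathbb{R}^{2d}$ and neither the green nor the red marginal of $\mu$ is supported on a proper linear subspace of $\mathbb{R}^d$. Let $\phi:([0,1],\mathrm{Leb})\to(\Omega,\mu)$ be a measure-preserving Borel isomorphism (a bijection modulo null sets), and let $W(u,v)=K(\phi(u),\phi(v))$. Then $W$ is almost twin-free.
   Context: $B^d_+=\{x\in\mathbb{R}^d:x_k\ge0\ \forall k,\ \|x\|\le1\}$, $\Omega=B^d_+\times B^d_+$; $s=(\vec g_s,\vec r_s)\in\Omega$ and $K(s,t)=\vec g_s\cdot\vec r_t$. Green/red marginals are pushforwards of $\mu$ under $s\mapsto\vec g_s$, $s\mapsto\vec r_s$. For a kernel $W:[0,1]^2\to[0,1]$, two labels $u\neq u'$ are twins if $W(u,t)=W(u',t)$ for a.e. $t$ and $W(t,u)=W(t,u')$ for a.e. $t$. $W$ is almost twin-free if there is a Lebesgue-null set $N\subset[0,1]$ such that no two distinct $u,u'\in[0,1]\setminus N$ are twins. *)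

(* Defs.v *)
From HB Require Import structures.
From mathcomp Require Import all_boot all_order all_algebra.
From mathcomp Require Import all_classical all_reals all_analysis.
Unset Printing Implicit Defensive.
Import Order.TTheory GRing.Theory Num.Theory.
Local Open Scope classical_set_scope.
Local Open Scope ring_scope.

(* Points of R^d are d-tuples (tuples carry the product = Borel sigma-algebra).
   A point s of R^d x R^d = R^(2d) is a pair (g_s, r_s). *)
Definition pt (R : realType) (d : nat) := (d.-tuple R * d.-tuple R)%type.

Definition dotp {R : realType} {d : nat} (x y : d.-tuple R) : R :=
  \sum_(i < d) tnth x i * tnth y i.

Definition Bplus (R : realType) (d : nat) : set (d.-tuple R) :=
  [set x | (forall i : 'I_d, 0 <= tnth x i) /\ dotp x x <= 1].

Definition Omega (R : realType) (d : nat) : set (pt R d) :=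
  Bplus R d `*` Bplus R d.

Definition Kern {R : realType} {d : nat} (s t : pt R d) : R := dotp s.1 t.2.

Definition rowv {R : realType} {d : nat} (x : d.-tuple R) : 'rV[R]_d :=
  \row_(i < d) tnth x i.

(* A linear subspace of R^d is the row space of a matrix M : 'M_d; it is proper
   iff \rank M < d. *)
Definition supported_on_subspace {R : realType} {d : nat}
    (nu : set (d.-tuple R) -> \bar R) (M : 'M[R]_d) : Prop :=
  nu [set x | ~~ (rowv x <= M)%MS] = 0%E.

(* Lebesgue-null subsets of R^d x R^d = R^(2d): for every eps > 0 they can be
   covered by countably many closed boxes of total volume <= eps. *)
Definition box {R : realType} {d : nat} (a b : pt R d) : set (pt R d) :=
  [set x | forall i : 'I_d,
     (tnth a.1 i <= tnth x.1 i <= tnth b.1 i) /\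
     (tnth a.2 i <= tnth x.2 i <= tnth b.2 i)].

Definition box_vol {R : realType} {d : nat} (a b : pt R d) : R :=
  (\prod_(i < d) (tnth b.1 i - tnth a.1 i)) *
  (\prod_(i < d) (tnth b.2 i - tnth a.2 i)).

Definition lebesgue_null2 {R : realType} {d : nat} (A : set (pt R d)) : Prop :=
  forall eps : R, 0 < eps ->
  exists a b : nat -> pt R d,
    (forall n (i : 'I_d), tnth (a n).1 i <= tnth (b n).1 i /\
                          tnth (a n).2 i <= tnth (b n).2 i) /\
    A `<=` \bigcup_n box (a n) (b n) /\
    (forall N, \sum_(n < N) box_vol (a n) (b n) <= eps).


Definition twins {R : realType} (W : R -> R -> R) (u u' : R) : Prop :=
  u <> u' /\
  {ae (@lebesgue_measure R), forall t, `[0, 1]%classic t -> W u t = W u' t} /\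
  {ae (@lebesgue_measure R), forall t, `[0, 1]%classic t -> W t u = W t u'}.

Definition almost_twin_free {R : realType} (W : R -> R -> R) : Prop :=
  exists N : set R, (@lebesgue_measure R).-negligible N /\
    forall u u', `[0, 1]%classic u -> `[0, 1]%classic u' -> ~ N u -> ~ N u' ->
      u <> u' -> ~ twins W u u'.

(* Main.v *)
Require Import Defs.
From HB Require Import structures.
From mathcomp Require Import all_boot all_order all_algebra.
From mathcomp Require Import all_classical all_reals all_analysis.
From mathcomp Require Import measurable_realfun.
Import Order.TTheory GRing.Theory Num.Theory.
Local Open Scope classical_set_scope.
Local Open Scope ring_scope.


Lemma dotpC (R : realType) (d : nat) (x y : d.-tuple R) : dotp x y = dotp y x.
Proof. by rewrite /dotp; apply: eq_bigr => i _; rewrite mulrC. Qed.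

Lemma dotp_meas (R : realType) (d : nat) (c : d.-tuple R) :
  measurable_fun [set: d.-tuple R] (fun x => dotp c x).
Proof.
rewrite /dotp; apply: measurable_sum => i.
apply: measurable_funM; first exact: measurable_cst.
exact: measurable_tnth.
Qed.

Lemma hyper_meas (R : realType) (d : nat) (g g' : d.-tuple R) :
  measurable [set x : d.-tuple R | dotp g x != dotp g' x].
Proof.
have mf : measurable_fun [set: d.-tuple R] (fun x => dotp g x - dotp g' x).
  by apply: measurable_funB; exact: dotp_meas.
rewrite (_ : [set x | _] = (fun x => dotp g x - dotp g' x) @^-1` [set~ (0:R)]).
  have := mf measurableT _ (measurableC (measurable_set1 (0:R))); by rewrite setTI.
apply/seteqP; split => x /=.
  by rewrite -subr_eq0 => /eqP.
by move=> h; rewrite -subr_eq0; apply/eqP.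
Qed.

Lemma hyper_sub (R : realType) (d : nat) (g g' : d.-tuple R) : g <> g' ->
  exists M : 'M[R]_d, (\rank M < d)%N /\
    [set x | ~~ (rowv x <= M)%MS] = [set x | dotp g x != dotp g' x].
Proof.
move=> ne.
pose v : 'cV[R]_d := \col_i (tnth g i - tnth g' i).
have v0 : v != 0.
  apply/negP => /eqP v0; apply: ne; apply: eq_from_tnth => i.
  have := congr1 (fun A : 'cV[R]_d => A i 0) v0.
  by rewrite !mxE => /eqP; rewrite subr_eq0 => /eqP.
have r1 : \rank v = 1%N.
  apply/eqP; rewrite eqn_leq rank_leq_col /= lt0n mxrank_eq0 //.
exists (kermx v); split.
  rewrite mxrank_ker r1.
  have : (0 < d)%N.
    case: d g g' ne {v v0 r1} => // g g' ne; exfalso; apply: ne.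
    by apply: eq_from_tnth => -[].
  by case: (d) => // n _; rewrite subn1.
have E x : (rowv x *m v) 0 0 = dotp g x - dotp g' x.
  rewrite !mxE /dotp -sumrB; apply: eq_bigr => k _.
  by rewrite !mxE mulrBr !(mulrC (tnth x k)).
apply/seteqP; split => x /=; rewrite sub_kermx; apply: contra_neq.
- move=> h; apply/matrixP => i j; rewrite !ord1 E h subrr mxE //.
- by move=> /matrixP/(_ 0 0); rewrite E mxE => /eqP; rewrite subr_eq0 => /eqP.
Qed.

Theorem mainTheorem8 (R : realType) (d : nat)
  (rho : {finite_measure set (pt R d) -> \bar R}) (Lambda : R)
  (mu : probability (pt R d) R) (phi : R -> pt R d) :
  (* rho is a finite intensity on Omega with total mass Lambda > 0 *)
  rho (~` Omega R d) = 0%E ->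
  rho setT = Lambda%:E -> 0 < Lambda ->
  (* mu = rho / Lambda *)
  (forall A, measurable A -> mu A = (rho A * (Lambda^-1)%:E)%E) ->
  (* mu is absolutely continuous w.r.t. Lebesgue measure on R^(2d) *)
  (forall A, measurable A -> lebesgue_null2 A -> mu A = 0%E) ->
  (* neither marginal is supported on a proper linear subspace of R^d *)
  (forall M : 'M[R]_d, (\rank M < d)%N ->
     ~ supported_on_subspace (pushforward mu fst) M) ->
  (forall M : 'M[R]_d, (\rank M < d)%N ->
     ~ supported_on_subspace (pushforward mu snd) M) ->
  (* phi : ([0,1], Leb) -> (Omega, mu) is a measure-preserving Borel
     isomorphism, i.e. a bijection modulo null sets *)
  (exists (N0 : set R) (M0 : set (pt R d)),
     [/\ measurable N0, (@lebesgue_measure R) N0 = 0%E,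
         measurable M0, mu M0 = 0%E &
     let D := `[0, 1]%classic `\` N0 in
     let E := Omega R d `\` M0 in
     [/\ set_bij D E phi,
         measurable_fun D phi,
         (exists psi : pt R d -> R, measurable_fun E psi /\
            forall y, E y -> D (psi y) /\ phi (psi y) = y) &
         forall B, measurable B ->
           (@lebesgue_measure R) (D `&` phi @^-1` B) = mu B]]) ->
  almost_twin_free (fun u v => Kern (phi u) (phi v)).
Proof.
move=> _ _ _ _ _ Hg Hr [N0 [M0 [mN0 N00 mM0 muM0 /=]]].
set D := `[0, 1]%classic `\` N0.
move=> [[_ injphi _] mphi _ hmp].
have mD : measurable D by apply: measurableD => //; exact: measurable_itv.
exists N0; split; first by exists N0; split.
move=> u u' u01 u'01 nu nu' neq [_ [ae1 ae2]].
have Du : D u by [].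
have Du' : D u' by [].
have key : forall (B : set (pt R d)), measurable B ->
    (forall t, D t -> B (phi t) -> ~ (`[0, 1]%classic t -> Kern (phi u) (phi t) = Kern (phi u') (phi t)))
    \/ (forall t, D t -> B (phi t) -> ~ (`[0, 1]%classic t -> Kern (phi t) (phi u) = Kern (phi t) (phi u')))
    -> mu B = 0%E.
  move=> B mB hB; rewrite -hmp //.
  case: hB => hB.
  - case: ae1 => A [mA A0 sA].
    apply/eqP; rewrite eq_le measure_ge0 andbT -A0; apply: le_measure; rewrite ?inE //.
      exact: mphi.
    by move=> t [Dt Bt]; apply: sA; exact: hB.
  - case: ae2 => A [mA A0 sA].
    apply/eqP; rewrite eq_le measure_ge0 andbT -A0; apply: le_measure; rewrite ?inE //.
      exact: mphi.
    by move=> t [Dt Bt]; apply: sA; exact: hB.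
have eg : (phi u).1 = (phi u').1.
  apply: contrapT => ne.
  have [M [rM eM]] := @hyper_sub _ _ _ _ ne.
  apply: (Hr M rM); rewrite /supported_on_subspace /pushforward eM.
  apply: key; first by rewrite -(setTI (snd @^-1` _)); exact: (measurable_snd measurableT _ (hyper_meas _ _ (phi u).1 (phi u').1)).
  left; move=> t Dt; rewrite /preimage /= => /eqP Bt h; apply: Bt.
  exact: h Dt.1.
have er : (phi u).2 = (phi u').2.
  apply: contrapT => ne.
  have [M [rM eM]] := @hyper_sub _ _ _ _ ne.
  apply: (Hg M rM); rewrite /supported_on_subspace /pushforward eM.
  apply: key; first by rewrite -(setTI (fst @^-1` _)); exact: (measurable_fst measurableT _ (hyper_meas _ _ (phi u).2 (phi u').2)).
  right; move=> t Dt; rewrite /preimage /= => /eqP Bt h; apply: Bt; rewrite /Kern in h.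
  by rewrite -[LHS](dotpC R d) -[RHS](dotpC R d); exact: h Dt.1.
apply: neq; apply: injphi; rewrite ?inE //.
by rewrite [phi u]surjective_pairing [phi u']surjective_pairing eg er.
Qed.
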